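(* Let $M$ be a timelike surface in $\mathbb{R}^{n,1}$ with a canonical null direction with respect to a constant unit spacelike vector $Z$, and let $W$ and $a$ be as below. Then $$\Delta a=-2Ka-2\,W(K),$$ where $K$ is the Gaussian curvature of $M$. In particular, if $K\equiv0$ then $a$ is harmonic.
   Context: $\mathbb{R}^{n,1}$ is $\mathbb{R}^{n+1}$ with the metric $-dx_1^2+dx_2^2+\dots+dx_{n+1}^2$. A surface is timelike if the induced metric has signature $(1,1)$; a vector $v$ is lightlike if $v\ne0$ and $\langle v,v\rangle=0$. For a constant vector $Z$, $Z=Z^\top+Z^\perp$ along $M$; $M$ has a canonical null direction with respect to $Z$ if $Z^\top$ is lightlike everywhere on $M$. $W$ is the unique lightlike tangent field with $\langle Z^\top,W\rangle=-1$, and $a:=\langle II(W,W),Z^\perp\rangle$ with $II$ the second fundamental form. $\Delta$ is the trace of the Hessian with respect to the induced Lorentzian metric. *)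

(* Defs.v *)
(* Local-coordinate formalization of a timelike
   surface in R^{n,1}: a smooth parametrization f : U (open in R^2) -> R^{n+1}. *)
From Stdlib Require Import Reals List.
From Coquelicot Require Import Coquelicot.
Open Scope R_scope.

Definition sumR (F : nat -> R) (m : nat) : R :=
  fold_right Rplus 0 (map F (seq 0 m)).
(* sum over the two coordinate directions: false = 1st, true = 2nd *)
Definition sumB (F : bool -> R) : R := F false + F true.

(* vectors of R^{n+1} are functions nat -> R, coordinates 0..n;
   coordinate 0 is the timelike one *)
Definition mink (n : nat) (x y : nat -> R) : R :=
  - x 0%nat * y 0%nat + sumR (fun i => x (S i) * y (S i)) n.

Definition pd (b : bool) (g : R -> R -> R) : R -> R -> R :=
  if b then (fun u v => Derive (fun t => g u t) v)
  else (fun u v => Derive (fun t => g t v) u).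

Definition pdl (s : list bool) (g : R -> R -> R) : R -> R -> R :=
  fold_right pd g s.

Definition openU (U : R -> R -> Prop) : Prop :=
  open (fun p : R * R => U (fst p) (snd p)).

Definition smooth_on (U : R -> R -> Prop) (g : R -> R -> R) : Prop :=
  forall (s : list bool) (u v : R), U u v ->
    ex_derive (fun t => pdl s g t v) u /\
    ex_derive (fun t => pdl s g u t) v /\
    continuous (fun p : R * R => pdl s g (fst p) (snd p)) (u, v).

Section Surf.
Variable n : nat.
Variable f : nat -> R -> R -> R.   (* component i of the parametrization *)

Definition fd (b : bool) (u v : R) : nat -> R := fun i => pd b (f i) u v.
Definition fdd (b c : bool) (u v : R) : nat -> R := fun i => pd c (pd b (f i)) u v.

Definition gm (b c : bool) (u v : R) : R := mink n (fd b u v) (fd c u v).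
Definition detg (u v : R) : R :=
  gm false false u v * gm true true u v - gm false true u v * gm true false u v.
Definition ginv (b c : bool) (u v : R) : R :=
  match b, c with
  | false, false => gm true true u v / detg u v
  | true, true => gm false false u v / detg u v
  | false, true => - gm false true u v / detg u v
  | true, false => - gm true false u v / detg u v
  end.

Definition tanpart (X : nat -> R) (u v : R) : nat -> R :=
  fun i => sumB (fun b => sumB (fun c =>
             ginv b c u v * mink n X (fd c u v) * fd b u v i)).
Definition normpart (X : nat -> R) (u v : R) : nat -> R :=
  fun i => X i - tanpart X u v i.

Definition II (b c : bool) (u v : R) : nat -> R := normpart (fdd b c u v) u v.

(* Christoffel symbols Gamma^k_{ij} of the induced metric *)
Definition chris (k i j : bool) (u v : R) : R :=
  / 2 * sumB (fun l => ginv k l u v *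
      (pd i (gm j l) u v + pd j (gm i l) u v - pd l (gm i j) u v)).

(* R(d1,d2)d2 = Rvec^l d_l, with R(X,Y)Z = nabla_X nabla_Y Z - nabla_Y nabla_X Z - nabla_[X,Y] Z *)
Definition Rvec (l : bool) (u v : R) : R :=
  pd false (chris l true true) u v - pd true (chris l false true) u v
  + sumB (fun k => chris k true true u v * chris l false k u v
                   - chris k false true u v * chris l true k u v).

(* Gaussian (sectional) curvature K = <R(d1,d2)d2,d1> / (g11 g22 - g12^2) *)
Definition gaussK (u v : R) : R :=
  sumB (fun l => gm false l u v * Rvec l u v) / detg u v.

Definition lap (h : R -> R -> R) (u v : R) : R :=
  sumB (fun i => sumB (fun j => ginv i j u v *
     (pd j (pd i h) u v - sumB (fun k => chris k i j u v * pd k h u v)))).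

Definition tvec (w : bool -> R -> R -> R) (u v : R) : nat -> R :=
  fun i => sumB (fun b => w b u v * fd b u v i).

End Surf.

(* Main.v *)
Require Import Defs.
From Stdlib Require Import Reals List Lra Lia.
From Coquelicot Require Import Coquelicot.
From Stdlib Require Import Nsatz.
Open Scope R_scope.

Definition fsum (l : list nat) (F : nat -> R) := fold_right Rplus 0 (map F l).

Lemma fsum_ext l F G : (forall i, In i l -> F i = G i) -> fsum l F = fsum l G.
Proof.
  induction l; simpl; intros H; auto. unfold fsum in *; simpl. rewrite H, IHl; auto.
Qed.
Lemma fsum_lin l a b F G : fsum l (fun i => a * F i + b * G i) = a * fsum l F + b * fsum l G.
Proof. induction l; unfold fsum in *; simpl; [ring|rewrite IHl; ring]. Qed.
Lemma fsum_sub l F G : fsum l (fun i => F i - G i) = fsum l F - fsum l G.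
Proof. induction l; unfold fsum in *; simpl; [ring|rewrite IHl; ring]. Qed.

Lemma mink_fsum n x y : mink n x y = - x 0%nat * y 0%nat + fsum (seq 0 n) (fun i => x (S i) * y (S i)).
Proof. reflexivity. Qed.

Lemma mink_ext n x x' y y' : (forall i, (i <= n)%nat -> x i = x' i) ->
  (forall i, (i <= n)%nat -> y i = y' i) -> mink n x y = mink n x' y'.
Proof.
  intros Hx Hy. rewrite !mink_fsum. rewrite (Hx 0%nat), (Hy 0%nat) by lia. f_equal.
  apply fsum_ext. intros i Hi. apply in_seq in Hi. rewrite Hx, Hy by lia. auto.
Qed.
Lemma mink_sym n x y : mink n x y = mink n y x.
Proof.
  rewrite !mink_fsum. rewrite (fsum_ext _ _ (fun i => y (S i) * x (S i))).
  ring. intros; ring.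
Qed.
Lemma mink_lin n a b x y z : mink n (fun i => a * x i + b * y i) z = a * mink n x z + b * mink n y z.
Proof.
  rewrite !mink_fsum. rewrite (fsum_ext _ _ (fun i => a * (x (S i) * z (S i)) + b * (y (S i) * z (S i)))).
  rewrite fsum_lin. ring. intros; ring.
Qed.
Lemma mink_sub n x y z : mink n (fun i => x i - y i) z = mink n x z - mink n y z.
Proof.
  rewrite !mink_fsum. rewrite (fsum_ext _ _ (fun i => (x (S i) * z (S i)) - (y (S i) * z (S i)))).
  rewrite fsum_sub. ring. intros; ring.
Qed.
Lemma mink_scal n a x z : mink n (fun i => a * x i) z = a * mink n x z.
Proof.
  rewrite !mink_fsum. rewrite (fsum_ext _ _ (fun i => a * (x (S i) * z (S i)) + 0 * (x (S i) * z (S i)))).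
  rewrite fsum_lin. ring. intros; ring.
Qed.


Lemma alg_H_aux z1 z2 h1 h2 H11 H12 H22 :
  z1*H11 + z2*H12 = 0 -> z1*H12 + z2*H22 = 0 -> z1*h1 + z2*h2 = 0 -> z1 <> 0 ->
  H11 * (h1*h1+h2*h2) = (H11+H22)*h1*h1 /\ H12 * (h1*h1+h2*h2) = (H11+H22)*h1*h2 /\
  H22 * (h1*h1+h2*h2) = (H11+H22)*h2*h2.
Proof.
  intros E1 E2 E3 Z.
  assert (e1 : H12 = -z2*H22/z1).
  { apply (Rmult_eq_reg_l z1); auto. replace (z1 * (-z2*H22/z1)) with (-z2*H22) by (field; auto). lra. }
  assert (e2 : H11 = -z2*H12/z1).
  { apply (Rmult_eq_reg_l z1); auto. replace (z1 * (-z2*H12/z1)) with (-z2*H12) by (field; auto). lra. }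
  assert (e3 : h1 = -z2*h2/z1).
  { apply (Rmult_eq_reg_l z1); auto. replace (z1 * (-z2*h2/z1)) with (-z2*h2) by (field; auto). lra. }
  rewrite e2, e1, e3. repeat split; field; auto.
Qed.

Lemma alg_H z1 z2 h1 h2 H11 H12 H22 w1 w2 :
  z1*H11 + z2*H12 = 0 -> z1*H12 + z2*H22 = 0 -> z1*h1 + z2*h2 = 0 -> (z1 <> 0 \/ z2 <> 0) ->
  w1*h1 + w2*h2 = -1 ->
  h1*h1+h2*h2 <> 0 /\
  H11 = (H11+H22)/(h1*h1+h2*h2)*h1*h1 /\ H12 = (H11+H22)/(h1*h1+h2*h2)*h1*h2 /\
  H22 = (H11+H22)/(h1*h1+h2*h2)*h2*h2 /\
  w1*w1*H11 + w1*w2*H12 + w2*w1*H12 + w2*w2*H22 = (H11+H22)/(h1*h1+h2*h2).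
Proof.
  intros E1 E2 E3 Z W.
  assert (S : h1*h1+h2*h2 <> 0).
  { intro S. assert (h1 = 0) by nra. assert (h2 = 0) by nra. subst. lra. }
  assert (K : H11 * (h1*h1+h2*h2) = (H11+H22)*h1*h1 /\ H12 * (h1*h1+h2*h2) = (H11+H22)*h1*h2 /\
    H22 * (h1*h1+h2*h2) = (H11+H22)*h2*h2).
  { destruct Z as [Z|Z].
    - apply (alg_H_aux z1 z2); auto.
    - destruct (alg_H_aux z2 z1 h2 h1 H22 H12 H11) as [A [B C]]; [lra|lra|lra|auto|].
      split; [|split]; lra. }
  destruct K as [K1 [K2 K3]].
  set (A := (H11+H22)/(h1*h1+h2*h2)).
  assert (a1 : H11 = A*h1*h1).
  { apply (Rmult_eq_reg_r (h1*h1+h2*h2)); auto. unfold A. rewrite K1. field; auto. }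
  assert (a2 : H12 = A*h1*h2).
  { apply (Rmult_eq_reg_r (h1*h1+h2*h2)); auto. unfold A. rewrite K2. field; auto. }
  assert (a3 : H22 = A*h2*h2).
  { apply (Rmult_eq_reg_r (h1*h1+h2*h2)); auto. unfold A. rewrite K3. field; auto. }
  split; auto. split; auto. split; auto. split; auto.
  rewrite a1, a2, a3.
  replace (w1 * w1 * (A * h1 * h1) + w1 * w2 * (A * h1 * h2) + w2 * w1 * (A * h1 * h2) + w2 * w2 * (A * h2 * h2))
    with (A * (w1*h1+w2*h2)^2) by ring.
  rewrite W. ring.
Qed.

Lemma alg_K gFF gFT gTT hF hT AF AT K :
  gFF*gTT - gFT*gFT <> 0 ->
  gTT*hF*hF - 2*gFT*hF*hT + gFF*hT*hT = 0 ->
  (hF <> 0 \/ hT <> 0) ->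
  K*(gTT*hF - gFT*hT) = -hT*(hT*AF - hF*AT) ->
  K*(gFT*hF - gFF*hT) = -hF*(hT*AF - hF*AT) ->
  K*(gFF*gTT - gFT*gFT) = (gTT*hF - gFT*hT)*AF + (gFF*hT - gFT*hF)*AT.
Proof.
  intros D Q N E1 E2.
  destruct N as [N|N].
  - apply (Rmult_eq_reg_r (hF*hF)); [|intro; apply N; nra].
    assert (X1 := f_equal (fun x => x * (gFT*hF - gFF*hT)) E2).
    assert (X2 := f_equal (fun x => x * (K*gFF - hF*AF)) Q).
    simpl in X1, X2. nra.
  - apply (Rmult_eq_reg_r (hT*hT)); [|intro; apply N; nra].
    assert (X1 := f_equal (fun x => x * (gTT*hF - gFT*hT)) E1).
    assert (X2 := f_equal (fun x => x * (K*gTT - hT*AT)) Q).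
    simpl in X1, X2. nra.
Qed.

Lemma solve2 a b c x y p q : a*c - b*b <> 0 -> a*x + b*y = p -> b*x + c*y = q ->
  x = (c*p - b*q)/(a*c - b*b) /\ y = (a*q - b*p)/(a*c-b*b).
Proof.
  intros D E1 E2. split.
  - apply (Rmult_eq_reg_r (a*c-b*b)); auto. rewrite <- E1, <- E2. field; auto.
  - apply (Rmult_eq_reg_r (a*c-b*b)); auto. rewrite <- E1, <- E2. field; auto.
Qed.

Lemma alg_gi gFF gFT gTT hF hT wF wT iD:
  (gFF*gTT - gFT*gFT) * iD = 1 ->
  gTT*hF*hF - 2*gFT*hF*hT + gFF*hT*hT = 0 ->
  gFF*wF*wF + 2*gFT*wF*wT + gTT*wT*wT = 0 ->
  wF*hF + wT*hT = -1 ->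
  gTT*iD = -((gTT*iD*hF + (-gFT)*iD*hT)*wF + wF*(gTT*iD*hF + (-gFT)*iD*hT)) /\
  (-gFT)*iD = -((gTT*iD*hF + (-gFT)*iD*hT)*wT + wF*((-gFT)*iD*hF + gFF*iD*hT)) /\
  (-gFT)*iD = -(((-gFT)*iD*hF + gFF*iD*hT)*wF + wT*(gTT*iD*hF + (-gFT)*iD*hT)) /\
  gFF*iD = -(((-gFT)*iD*hF + gFF*iD*hT)*wT+wT*((-gFT)*iD*hF + gFF*iD*hT)).
Proof. intros. split; [|split; [|split]]; nsatz. Qed.

Section Calc.
Variable U : R -> R -> Prop.
Hypothesis HU : openU U.

Lemma U_loc2d u v : U u v -> locally_2d U u v.
Proof.
  intros H. apply locally_2d_locally.
  apply (locally_open (fun p : R*R => U (fst p) (snd p))); auto.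
Qed.

Definition exd (b:bool) (g : R->R->R) u v : Prop :=
  if b then ex_derive (fun t => g u t) v else ex_derive (fun t => g t v) u.
Definition C0 (g : R -> R -> R) := forall u v, U u v -> continuity_2d_pt g u v.
Fixpoint Ck (k:nat) (g : R -> R -> R) : Prop :=
  match k with
  | O => C0 g
  | S k' => C0 g /\ (forall b u v, U u v -> exd b g u v) /\ (forall b, Ck k' (pd b g))
  end.
Definition eqU (g1 g2 : R -> R -> R) := forall u v, U u v -> g1 u v = g2 u v.

Lemma loc_x u v P : U u v -> (forall t, U t v -> P t) -> locally u P.
Proof.
  intros H HP. apply U_loc2d in H. apply locally_2d_1d_const_y in H.
  eapply filter_imp; [|exact H]. intros; auto.
Qed.
Lemma loc_y u v P : U u v -> (forall t, U u t -> P t) -> locally v P.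
Proof.
  intros H HP. apply U_loc2d in H. apply locally_2d_1d_const_x in H.
  eapply filter_imp; [|exact H]. intros; auto.
Qed.

Lemma pd_ext b g1 g2 : eqU g1 g2 -> eqU (pd b g1) (pd b g2).
Proof.
  intros E u v H. destruct b; simpl; apply Derive_ext_loc.
  - apply (loc_y u v); auto.
  - apply (loc_x u v); auto.
Qed.

Lemma exd_ext b g1 g2 u v : eqU g1 g2 -> U u v -> exd b g1 u v -> exd b g2 u v.
Proof.
  intros E H. destruct b; simpl; apply ex_derive_ext_loc.
  - apply (loc_y u v); auto.
  - apply (loc_x u v); auto.
Qed.

Lemma C0_ext g1 g2 : eqU g1 g2 -> C0 g1 -> C0 g2.
Proof.
  intros E C u v H. apply continuity_2d_pt_ext_loc with g1; auto.
  apply locally_2d_impl with U; [|apply U_loc2d; auto].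
  apply locally_2d_forall. auto.
Qed.

Lemma Ck_ext k : forall g1 g2, eqU g1 g2 -> Ck k g1 -> Ck k g2.
Proof.
  induction k; simpl; intros g1 g2 E C.
  - eapply C0_ext; eauto.
  - destruct C as [C1 [C2 C3]]. split; [eapply C0_ext; eauto|split].
    + intros b u v H. eapply exd_ext; eauto.
    + intros b. eapply IHk; [apply pd_ext, E| auto].
Qed.

Lemma Ck_C0 k g : Ck k g -> C0 g.
Proof. destruct k; simpl; tauto. Qed.

Lemma Ck_mono k : forall g, Ck (S k) g -> Ck k g.
Proof.
  induction k; simpl; intros g C.
  - tauto.
  - destruct C as [C1 [C2 C3]]. split; [exact C1|split; [exact C2|]].
    intros b. apply IHk. apply C3.
Qed.

Lemma pd_plus b g1 g2 u v : exd b g1 u v -> exd b g2 u v ->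
  pd b (fun u v => g1 u v + g2 u v) u v = pd b g1 u v + pd b g2 u v.
Proof. destruct b; simpl; intros;
  [apply (Derive_plus (fun t => g1 u t) (fun t => g2 u t))|apply (Derive_plus (fun t => g1 t v) (fun t => g2 t v))]; auto. Qed.
Lemma pd_minus b g1 g2 u v : exd b g1 u v -> exd b g2 u v ->
  pd b (fun u v => g1 u v - g2 u v) u v = pd b g1 u v - pd b g2 u v.
Proof. destruct b; simpl; intros;
  [apply (Derive_minus (fun t => g1 u t) (fun t => g2 u t))|apply (Derive_minus (fun t => g1 t v) (fun t => g2 t v))]; auto. Qed.
Lemma pd_mult b g1 g2 u v : exd b g1 u v -> exd b g2 u v ->
  pd b (fun u v => g1 u v * g2 u v) u v = pd b g1 u v * g2 u v + g1 u v * pd b g2 u v.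
Proof. destruct b; simpl; intros;
  [apply (Derive_mult (fun t => g1 u t) (fun t => g2 u t))|apply (Derive_mult (fun t => g1 t v) (fun t => g2 t v))]; auto. Qed.
Lemma pd_opp b g u v : pd b (fun u v => - g u v) u v = - pd b g u v.
Proof. destruct b; simpl; apply Derive_opp. Qed.
Lemma pd_const b c u v : pd b (fun _ _ => c) u v = 0.
Proof. destruct b; simpl; apply Derive_const. Qed.
Lemma pd_inv b g u v : exd b g u v -> g u v <> 0 ->
  pd b (fun u v => / g u v) u v = - pd b g u v / (g u v) ^ 2.
Proof. destruct b; simpl; intros; apply Derive_inv; auto. Qed.
Lemma pd_div b g1 g2 u v : exd b g1 u v -> exd b g2 u v -> g2 u v <> 0 ->
  pd b (fun u v => g1 u v / g2 u v) u v =
  (pd b g1 u v * g2 u v - g1 u v * pd b g2 u v) / (g2 u v) ^ 2.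
Proof. destruct b; simpl; intros;
  [apply (Derive_div (fun t => g1 u t) (fun t => g2 u t))|apply (Derive_div (fun t => g1 t v) (fun t => g2 t v))]; auto. Qed.

Lemma exd_plus b g1 g2 u v : exd b g1 u v -> exd b g2 u v ->
  exd b (fun u v => g1 u v + g2 u v) u v.
Proof. destruct b; simpl; intros A B;
  [exact (ex_derive_plus (fun t => g1 u t) (fun t => g2 u t) v A B)
  |exact (ex_derive_plus (fun t => g1 t v) (fun t => g2 t v) u A B)]. Qed.
Lemma exd_mult b g1 g2 u v : exd b g1 u v -> exd b g2 u v ->
  exd b (fun u v => g1 u v * g2 u v) u v.
Proof. destruct b; simpl; intros; apply ex_derive_mult; auto. Qed.
Lemma exd_opp b g u v : exd b g u v -> exd b (fun u v => - g u v) u v.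
Proof. destruct b; simpl; intros A;
  [exact (ex_derive_opp (fun t => g u t) v A)
  |exact (ex_derive_opp (fun t => g t v) u A)]. Qed.
Lemma exd_const b c u v : exd b (fun _ _ => c) u v.
Proof. destruct b; simpl; apply ex_derive_const. Qed.
Lemma exd_inv b g u v : exd b g u v -> g u v <> 0 -> exd b (fun u v => / g u v) u v.
Proof. destruct b; simpl; intros; apply ex_derive_inv; auto. Qed.

Lemma C0_plus g1 g2 : C0 g1 -> C0 g2 -> C0 (fun u v => g1 u v + g2 u v).
Proof. intros A B u v H; apply continuity_2d_pt_plus; auto. Qed.
Lemma C0_mult g1 g2 : C0 g1 -> C0 g2 -> C0 (fun u v => g1 u v * g2 u v).
Proof. intros A B u v H; apply continuity_2d_pt_mult; auto. Qed.
Lemma C0_opp g : C0 g -> C0 (fun u v => - g u v).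
Proof. intros A u v H; apply continuity_2d_pt_opp; auto. Qed.
Lemma C0_const c : C0 (fun _ _ => c).
Proof. intros u v H; apply continuity_2d_pt_const. Qed.
Lemma C0_inv g : C0 g -> (forall u v, U u v -> g u v <> 0) -> C0 (fun u v => / g u v).
Proof. intros A B u v H; apply continuity_2d_pt_inv; auto. Qed.

Lemma Ck_plus k : forall g1 g2, Ck k g1 -> Ck k g2 -> Ck k (fun u v => g1 u v + g2 u v).
Proof.
  induction k; simpl; intros g1 g2 A B.
  - apply C0_plus; auto.
  - destruct A as [A1 [A2 A3]], B as [B1 [B2 B3]].
    split; [apply C0_plus; auto|split].
    + intros; apply exd_plus; auto.
    + intros b. apply Ck_ext with (fun u v => pd b g1 u v + pd b g2 u v).
      * intros u v H; symmetry; apply pd_plus; auto.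
      * apply IHk; auto.
Qed.

Lemma Ck_opp k : forall g, Ck k g -> Ck k (fun u v => - g u v).
Proof.
  induction k; simpl; intros g A.
  - apply C0_opp; auto.
  - destruct A as [A1 [A2 A3]].
    split; [apply C0_opp; auto|split].
    + intros; apply exd_opp; auto.
    + intros b. apply Ck_ext with (fun u v => - pd b g u v).
      * intros u v H; symmetry; apply pd_opp.
      * apply IHk; auto.
Qed.

Lemma Ck_const k c : Ck k (fun _ _ => c).
Proof.
  revert c; induction k; simpl; intros c.
  - apply C0_const.
  - split; [apply C0_const|split].
    + intros; apply exd_const.
    + intros b. apply Ck_ext with (fun _ _ => 0).
      * intros u v H; symmetry; apply pd_const.
      * apply IHk.
Qed.

Lemma Ck_mult k : forall g1 g2, Ck k g1 -> Ck k g2 -> Ck k (fun u v => g1 u v * g2 u v).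
Proof.
  induction k; simpl; intros g1 g2 A B.
  - apply C0_mult; auto.
  - destruct A as [A1 [A2 A3]], B as [B1 [B2 B3]].
    split; [apply C0_mult; auto|split].
    + intros; apply exd_mult; auto.
    + intros b. apply Ck_ext with (fun u v => pd b g1 u v * g2 u v + g1 u v * pd b g2 u v).
      * intros u v H; symmetry; apply pd_mult; auto.
      * apply Ck_plus; apply IHk; auto; apply Ck_mono; simpl; auto.
Qed.

Lemma Ck_inv k : forall g, Ck k g -> (forall u v, U u v -> g u v <> 0) ->
  Ck k (fun u v => / g u v).
Proof.
  induction k; simpl; intros g A N.
  - apply C0_inv; auto.
  - destruct A as [A1 [A2 A3]].
    split; [apply C0_inv; auto|split].
    + intros; apply exd_inv; auto.
    + intros b. apply Ck_ext with (fun u v => - pd b g u v * (/ g u v * / g u v)).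
      * intros u v H. rewrite pd_inv; auto. field. auto.
      * apply Ck_mult; [apply Ck_opp; auto|].
        assert (Ck k g) by (apply Ck_mono; simpl; auto).
        apply Ck_mult; apply IHk; auto.
Qed.

Definition Sm g := forall k, Ck k g.

Lemma Sm_ext g1 g2 : eqU g1 g2 -> Sm g1 -> Sm g2.
Proof. intros E S k. eapply Ck_ext; eauto. Qed.
Lemma Sm_plus g1 g2 : Sm g1 -> Sm g2 -> Sm (fun u v => g1 u v + g2 u v).
Proof. intros A B k; apply Ck_plus; auto. Qed.
Lemma Sm_mult g1 g2 : Sm g1 -> Sm g2 -> Sm (fun u v => g1 u v * g2 u v).
Proof. intros A B k; apply Ck_mult; auto. Qed.
Lemma Sm_opp g : Sm g -> Sm (fun u v => - g u v).
Proof. intros A k; apply Ck_opp; auto. Qed.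
Lemma Sm_minus g1 g2 : Sm g1 -> Sm g2 -> Sm (fun u v => g1 u v - g2 u v).
Proof. intros A B. unfold Rminus. apply (Sm_plus g1 (fun u v => - g2 u v)); auto. apply Sm_opp; auto. Qed.
Lemma Sm_const c : Sm (fun _ _ => c).
Proof. intros k; apply Ck_const. Qed.
Lemma Sm_inv g : Sm g -> (forall u v, U u v -> g u v <> 0) -> Sm (fun u v => / g u v).
Proof. intros A N k; apply Ck_inv; auto. Qed.
Lemma Sm_div g1 g2 : Sm g1 -> Sm g2 -> (forall u v, U u v -> g2 u v <> 0) ->
  Sm (fun u v => g1 u v / g2 u v).
Proof. intros A B N. unfold Rdiv. apply (Sm_mult g1 (fun u v => / g2 u v)); auto. apply Sm_inv; auto. Qed.
Lemma Sm_pd b g : Sm g -> Sm (pd b g).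
Proof. intros A k. destruct (A (S k)) as [_ [_ C]]. exact (C b). Qed.
Lemma Sm_exd b g u v : Sm g -> U u v -> exd b g u v.
Proof. intros A H. destruct (A 1%nat) as [_ [C _]]. auto. Qed.
Lemma Sm_C0 g : Sm g -> C0 g.
Proof. intros A. exact (A O). Qed.

Lemma pdl_app s b g : pdl s (pd b g) = pdl (s ++ b :: nil) g.
Proof. unfold pdl. rewrite fold_right_app. reflexivity. Qed.

Lemma smooth_Sm g : smooth_on U g -> Sm g.
Proof.
  intros S k. revert g S. induction k; intros g S; simpl.
  - intros u v H. apply continuity_2d_pt_filterlim. apply (S nil u v H).
  - split; [|split].
    + intros u v H. apply continuity_2d_pt_filterlim. apply (S nil u v H).
    + intros b u v H. destruct (S nil u v H) as [A [B _]]. destruct b; simpl; auto.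
    + intros b. apply IHk. intros s u v H. rewrite pdl_app. apply S; auto.
Qed.

Lemma Sm_schwarz g : Sm g -> eqU (pd true (pd false g)) (pd false (pd true g)).
Proof.
  intros A u v H. simpl. symmetry.
  apply Schwarz.
  - apply locally_2d_impl with U; [|apply U_loc2d; auto].
    apply locally_2d_forall. intros x y Hxy.
    split; [apply (Sm_exd false g x y A Hxy)|].
    split; [apply (Sm_exd true g x y A Hxy)|].
    split; [apply (Sm_exd false (pd true g) x y (Sm_pd _ _ A) Hxy)|].
    apply (Sm_exd true (pd false g) x y (Sm_pd _ _ A) Hxy).
  - apply (Sm_C0 (pd false (pd true g))); auto. do 2 apply Sm_pd; auto.
  - apply (Sm_C0 (pd true (pd false g))); auto. do 2 apply Sm_pd; auto.
Qed.

Lemma Sm_schwarz' b c g : Sm g -> eqU (pd b (pd c g)) (pd c (pd b g)).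
Proof.
  intros A u v H. destruct b, c; auto.
  - apply Sm_schwarz; auto.
  - symmetry; apply Sm_schwarz; auto.
Qed.



Lemma exd_fsum b l (F : nat -> R -> R -> R) u v : (forall i, In i l -> exd b (F i) u v) ->
  exd b (fun u v => fsum l (fun i => F i u v)) u v.
Proof.
  induction l as [|a l IHl]; intros H; unfold fsum in *; simpl.
  - apply exd_const.
  - apply (exd_plus b (F a) (fun u v => fold_right Rplus 0 (map (fun i => F i u v) l))).
    apply H; simpl; auto. apply IHl. intros; apply H; simpl; auto.
Qed.

Lemma pd_fsum b l (F : nat -> R -> R -> R) u v : (forall i, In i l -> exd b (F i) u v) ->
  pd b (fun u v => fsum l (fun i => F i u v)) u v = fsum l (fun i => pd b (F i) u v).
Proof.
  induction l as [|a l IHl]; intros H; unfold fsum in *; simpl.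
  - apply pd_const.
  - rewrite (pd_plus b (F a) (fun u v => fold_right Rplus 0 (map (fun i => F i u v) l))).
    rewrite IHl; auto. intros; apply H; simpl; auto.
    apply H; simpl; auto.
    apply (exd_fsum b l F u v). intros; apply H; simpl; auto.
Qed.

Lemma Sm_fsum l (F : nat -> R -> R -> R) : (forall i, In i l -> Sm (F i)) ->
  Sm (fun u v => fsum l (fun i => F i u v)).
Proof.
  induction l as [|a l IHl]; intros H; unfold fsum in *; simpl.
  - apply Sm_const.
  - apply (Sm_plus (F a) (fun u v => fold_right Rplus 0 (map (fun i => F i u v) l))).
    apply H; simpl; auto. apply IHl. intros; apply H; simpl; auto.
Qed.



Lemma Sm_mink n (X Y : nat -> R -> R -> R) :
  (forall i, (i <= n)%nat -> Sm (X i)) -> (forall i, (i <= n)%nat -> Sm (Y i)) ->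
  Sm (fun u v => mink n (fun i => X i u v) (fun i => Y i u v)).
Proof.
  intros HX HY. unfold mink.
  apply (Sm_plus (fun u v => - X 0%nat u v * Y 0%nat u v)).
  - apply (Sm_mult (fun u v => - X 0%nat u v)). apply Sm_opp; apply HX; lia. apply HY; lia.
  - apply (Sm_fsum (seq 0 n) (fun i u v => X (S i) u v * Y (S i) u v)).
    intros i Hi. apply in_seq in Hi. apply Sm_mult; [apply HX|apply HY]; lia.
Qed.

Lemma pd_mink n b (X Y : nat -> R -> R -> R) u v :
  (forall i, (i <= n)%nat -> exd b (X i) u v) -> (forall i, (i <= n)%nat -> exd b (Y i) u v) ->
  pd b (fun u v => mink n (fun i => X i u v) (fun i => Y i u v)) u v =
  mink n (fun i => pd b (X i) u v) (fun i => Y i u v) + mink n (fun i => X i u v) (fun i => pd b (Y i) u v).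
Proof.
  intros HX HY. unfold mink.
  rewrite (pd_plus b (fun u v => - X 0%nat u v * Y 0%nat u v)).
  rewrite (pd_mult b (fun u v => - X 0%nat u v)), pd_opp.
  change (fun u0 v0 => sumR (fun i => X (S i) u0 v0 * Y (S i) u0 v0) n) with
    (fun u0 v0 => fsum (seq 0 n) (fun i => (fun i u v => X (S i) u v * Y (S i) u v) i u0 v0)).
  rewrite pd_fsum.
  change (sumR ?F n) with (fsum (seq 0 n) F).
  rewrite (fsum_ext _ (fun i => pd b (fun u0 v0 => X (S i) u0 v0 * Y (S i) u0 v0) u v)
     (fun i => 1 * (pd b (X (S i)) u v * Y (S i) u v) + 1 * (X (S i) u v * pd b (Y (S i)) u v))).
  rewrite fsum_lin. ring.
  - intros i Hi; apply in_seq in Hi. rewrite pd_mult; [ring| apply HX | apply HY]; lia.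
  - intros i Hi; apply in_seq in Hi. apply exd_mult; [apply HX|apply HY]; lia.
  - apply exd_opp, HX; lia.
  - apply HY; lia.
  - apply exd_mult; [apply exd_opp, HX|apply HY]; lia.
  - apply (exd_fsum b (seq 0 n) (fun i u v => X (S i) u v * Y (S i) u v)).
    intros i Hi; apply in_seq in Hi. apply exd_mult; [apply HX|apply HY]; lia.
Qed.


Variable n : nat.
Variable f : nat -> R -> R -> R.
Hypothesis Hf : forall i, (i <= n)%nat -> smooth_on U (f i).
Variable Z : nat -> R.

Definition hh : R -> R -> R := fun u v => mink n Z (fun i => f i u v).

Lemma Sm_f i : (i <= n)%nat -> Sm (f i).
Proof. intros; apply smooth_Sm; auto. Qed.

Lemma Sm_gm b c : Sm (gm n f b c).
Proof.
  unfold gm, fd.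
  apply (Sm_mink n (fun i => pd b (f i)) (fun i => pd c (f i))); intros; apply Sm_pd, Sm_f; auto.
Qed.

Lemma pd_gm k b c u v : U u v ->
  pd k (gm n f b c) u v = mink n (fdd f b k u v) (fd f c u v) + mink n (fd f b u v) (fdd f c k u v).
Proof.
  intros H. unfold gm, fd.
  rewrite (pd_mink n k (fun i => pd b (f i)) (fun i => pd c (f i))); auto;
   intros; apply Sm_exd; auto; apply Sm_pd, Sm_f; auto.
Qed.

Lemma Sm_hh : Sm hh.
Proof.
  unfold hh. apply (Sm_mink n (fun i _ _ => Z i) f); intros; [apply Sm_const|apply Sm_f; auto].
Qed.

Lemma mink_zero_l m y : mink m (fun _ => 0) y = 0.
Proof.
  rewrite (mink_ext m (fun _ => 0) (fun i => 0 * (fun _ : nat => 0) i) y y);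
  [rewrite mink_scal; ring| intros; ring | auto].
Qed.

Lemma pd_hh b u v : U u v -> pd b hh u v = mink n Z (fd f b u v).
Proof.
  intros H. unfold hh, fd.
  rewrite (pd_mink n b (fun i _ _ => Z i) f); auto.
  - rewrite (mink_ext n (fun i => pd b (fun _ _ => Z i) u v) (fun _ => 0) _ (fun i => f i u v)).
    rewrite mink_zero_l, Rplus_0_l. reflexivity. intros; apply pd_const. auto.
  - intros; apply exd_const.
  - intros; apply Sm_exd; auto; apply Sm_f; auto.
Qed.

Lemma pd_pd_hh b c u v : U u v -> pd c (pd b hh) u v = mink n Z (fdd f b c u v).
Proof.
  intros H. rewrite (pd_ext c (pd b hh) (fun u v => mink n (fun i => Z i) (fun i => pd b (f i) u v))); auto.
  - rewrite (pd_mink n c (fun i _ _ => Z i) (fun i => pd b (f i))); auto.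
    + rewrite (mink_ext n (fun i => pd c (fun _ _ => Z i) u v) (fun _ => 0) _ (fun i => pd b (f i) u v)).
      rewrite mink_zero_l, Rplus_0_l. reflexivity. intros; apply pd_const. auto.
    + intros; apply exd_const.
    + intros; apply Sm_exd; auto; apply Sm_pd, Sm_f; auto.
  - intros x y Hxy. rewrite pd_hh; auto.
Qed.

Lemma fdd_sym b c u v : U u v -> forall i, (i <= n)%nat -> fdd f b c u v i = fdd f c b u v i.
Proof.
  intros H i Hi. unfold fdd. apply Sm_schwarz'; auto. apply Sm_f; auto.
Qed.

Lemma gm_sym b c u v : gm n f b c u v = gm n f c b u v.
Proof. unfold gm. apply mink_sym. Qed.

Lemma chris_eq k b c u v : U u v ->
  chris n f k b c u v = sumB (fun l => ginv n f k l u v * mink n (fdd f b c u v) (fd f l u v)).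
Proof.
  intros H. unfold chris, sumB. rewrite !pd_gm by auto.
  assert (E : forall x y z, mink n (fdd f x y u v) z = mink n (fdd f y x u v) z).
  { intros. apply mink_ext; auto. intros; apply fdd_sym; auto. }
  rewrite (mink_sym n (fd f c u v) (fdd f false b u v)), (mink_sym n (fd f b u v) (fdd f false c u v)),
    (mink_sym n (fd f c u v) (fdd f true b u v)), (mink_sym n (fd f b u v) (fdd f true c u v)),
    (mink_sym n (fd f b u v) (fdd f c false u v)), (mink_sym n (fd f b u v) (fdd f c true u v)).
  rewrite !(E c b), !(E false b), !(E false c), !(E true b), !(E true c).
  field.
Qed.



Definition tco (X : nat -> R) (b : bool) u v :=
  sumB (fun c => ginv n f b c u v * mink n X (fd f c u v)).

Lemma mink_tan_l X Y u v : mink n (tanpart n f X u v) Y =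
  tco X false u v * mink n (fd f false u v) Y + tco X true u v * mink n (fd f true u v) Y.
Proof.
  rewrite <- mink_lin. apply mink_ext; auto. intros i _. unfold tanpart, tco, sumB. ring.
Qed.

Lemma mink_tan_r X Y u v : mink n Y (tanpart n f X u v) =
  tco X false u v * mink n Y (fd f false u v) + tco X true u v * mink n Y (fd f true u v).
Proof. rewrite mink_sym, mink_tan_l, !(mink_sym n Y). reflexivity. Qed.

Lemma mink_norm_l X Y u v : mink n (normpart n f X u v) Y = mink n X Y - mink n (tanpart n f X u v) Y.
Proof. unfold normpart. apply mink_sub. Qed.
Lemma mink_norm_r X Y u v : mink n Y (normpart n f X u v) = mink n Y X - mink n Y (tanpart n f X u v).
Proof. rewrite mink_sym, mink_norm_l, !(mink_sym n Y). reflexivity. Qed.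

Lemma detg_ne u v : U u v -> detg n f u v < 0 -> detg n f u v <> 0.
Proof. intros; lra. Qed.


Definition HessF (b c : bool) : R -> R -> R := fun u v =>
  pd c (pd b hh) u v - sumB (fun k => chris n f k b c u v * pd k hh u v).

Lemma gm_fold b c u v : mink n (fd f b u v) (fd f c u v) = gm n f b c u v.
Proof. reflexivity. Qed.

Lemma M_eq b c u v : U u v -> detg n f u v <> 0 ->
  mink n (II n f b c u v) (normpart n f Z u v) = HessF b c u v.
Proof.
  intros H D. unfold II, HessF.
  rewrite mink_norm_l, !mink_norm_r, !mink_tan_l, !mink_tan_r.
  rewrite !gm_fold. unfold tco, sumB. rewrite pd_pd_hh, !pd_hh by auto. rewrite !chris_eq by auto.
  unfold sumB.
  rewrite !(mink_sym n Z).
  rewrite (gm_sym true false).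
  unfold ginv. unfold detg in *. rewrite (gm_sym true false) in *.
  field; auto.
Qed.


Definition zeta (b : bool) : R -> R -> R := fun u v =>
  sumB (fun c => ginv n f b c u v * pd c hh u v).

Lemma tco_Z b u v : U u v -> tco Z b u v = zeta b u v.
Proof.
  intros H. unfold tco, zeta, sumB. rewrite !pd_hh by auto. rewrite !(mink_sym n Z). reflexivity.
Qed.

Lemma null_eq u v : U u v -> detg n f u v <> 0 ->
  mink n (tanpart n f Z u v) (tanpart n f Z u v) = sumB (fun b => zeta b u v * pd b hh u v).
Proof.
  intros H D. rewrite mink_tan_l, !mink_tan_r, !gm_fold, !tco_Z by auto.
  unfold zeta, sumB. unfold ginv. unfold detg in *. rewrite (gm_sym true false) in *.
  field; auto.
Qed.

Lemma tz_nz u v : U u v -> (exists i, (i <= n)%nat /\ tanpart n f Z u v i <> 0) ->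
  zeta false u v <> 0 \/ zeta true u v <> 0.
Proof.
  intros H [i [Hi Hne]].
  destruct (Req_dec (zeta false u v) 0) as [E0|E0]; auto.
  destruct (Req_dec (zeta true u v) 0) as [E1|E1]; auto.
  exfalso. apply Hne.
  replace (tanpart n f Z u v i) with (tco Z false u v * fd f false u v i + tco Z true u v * fd f true u v i).
  rewrite !tco_Z, E0, E1 by auto. ring.
  unfold tanpart, tco, sumB. ring.
Qed.

Lemma tvec_null (w : bool -> R -> R -> R) u v :
  mink n (tvec f w u v) (tvec f w u v) = sumB (fun b => sumB (fun c => w b u v * w c u v * gm n f b c u v)).
Proof.
  unfold tvec. unfold sumB.
  rewrite mink_lin. rewrite !(mink_sym n _ (fun i => _ + _)). rewrite !mink_lin.
  rewrite !gm_fold. rewrite (gm_sym false true). ring.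
Qed.

Lemma tan_tvec (w : bool -> R -> R -> R) u v : U u v -> detg n f u v <> 0 ->
  mink n (tanpart n f Z u v) (tvec f w u v) = sumB (fun c => w c u v * pd c hh u v).
Proof.
  intros H D. rewrite mink_tan_l, !tco_Z by auto.
  unfold tvec, sumB. rewrite !(mink_sym n _ (fun i => _ + _)). rewrite !mink_lin.
  rewrite !gm_fold. unfold zeta, sumB. unfold ginv. unfold detg in *. rewrite (gm_sym true false) in *.
  field; auto.
Qed.


Hypothesis HD : forall u v, U u v -> detg n f u v < 0.

Lemma Sm_detg : Sm (detg n f).
Proof.
  unfold detg. apply (Sm_minus (fun u v => gm n f false false u v * gm n f true true u v)
     (fun u v => gm n f false true u v * gm n f true false u v));
  apply Sm_mult; apply Sm_gm.
Qed.

Lemma detg_nz u v : U u v -> detg n f u v <> 0.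
Proof. intros H; specialize (HD u v H); lra. Qed.

Lemma Sm_ginv b c : Sm (ginv n f b c).
Proof.
  assert (Hn : forall u v, U u v -> detg n f u v <> 0) by apply detg_nz.
  destruct b, c; unfold ginv.
  - apply (Sm_div (gm n f false false)); auto; apply Sm_gm || apply Sm_detg.
  - apply (Sm_div (fun u v => - gm n f true false u v)); auto. apply Sm_opp, Sm_gm. apply Sm_detg.
  - apply (Sm_div (fun u v => - gm n f false true u v)); auto. apply Sm_opp, Sm_gm. apply Sm_detg.
  - apply (Sm_div (gm n f true true)); auto; apply Sm_gm || apply Sm_detg.
Qed.

Lemma Sm_chris k i j : Sm (chris n f k i j).
Proof.
  unfold chris, sumB.
  apply (Sm_mult (fun _ _ => / 2)). apply Sm_const.
  apply Sm_plus; apply Sm_mult; try apply Sm_ginv;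
  apply Sm_minus; try apply Sm_plus; apply Sm_pd, Sm_gm.
Qed.

Lemma Sm_HessF b c : Sm (HessF b c).
Proof.
  unfold HessF, sumB. apply Sm_minus. apply Sm_pd, Sm_pd, Sm_hh.
  apply Sm_plus; apply Sm_mult; try apply Sm_chris; apply Sm_pd, Sm_hh.
Qed.

Lemma Sm_zeta b : Sm (zeta b).
Proof.
  unfold zeta, sumB. apply Sm_plus; apply Sm_mult; try apply Sm_ginv; apply Sm_pd, Sm_hh.
Qed.

Lemma Sm_Rvec l : Sm (Rvec n f l).
Proof.
  unfold Rvec, sumB. apply Sm_plus. apply Sm_minus; apply Sm_pd, Sm_chris.
  apply Sm_plus; apply Sm_minus; apply Sm_mult; apply Sm_chris.
Qed.

Lemma Sm_K : Sm (gaussK n f).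
Proof.
  unfold gaussK, sumB. apply (Sm_div (fun u v => gm n f false false u v * Rvec n f false u v +
      gm n f false true u v * Rvec n f true u v)).
  apply Sm_plus; apply Sm_mult; try apply Sm_gm; apply Sm_Rvec.
  apply Sm_detg. apply detg_nz.
Qed.


Ltac smt_gen extra := lazymatch goal with
  | |- Sm (fun x y => @?A x y + @?B x y) => apply (Sm_plus A B); smt_gen extra
  | |- Sm (fun x y => @?A x y - @?B x y) => apply (Sm_minus A B); smt_gen extra
  | |- Sm (fun x y => @?A x y * @?B x y) => apply (Sm_mult A B); smt_gen extra
  | |- Sm (fun x y => @?A x y / @?B x y) => apply (Sm_div A B); [smt_gen extra|smt_gen extra|auto]
  | |- Sm (fun x y => - @?A x y) => apply (Sm_opp A); smt_gen extra
  | |- Sm (fun _ _ => ?c) => apply Sm_const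
  | |- Sm (pd _ _) => apply Sm_pd; smt_gen extra
  | |- Sm (gm _ _ _ _) => apply Sm_gm
  | |- Sm (detg _ _) => apply Sm_detg
  | |- Sm (ginv _ _ _ _) => apply Sm_ginv
  | |- Sm (chris _ _ _ _ _) => apply Sm_chris
  | |- Sm hh => apply Sm_hh
  | |- Sm (HessF _ _) => apply Sm_HessF
  | |- Sm (zeta _) => apply Sm_zeta
  | |- Sm (Rvec _ _ _) => apply Sm_Rvec
  | |- Sm (gaussK _ _) => apply Sm_K
  | |- Sm (fun x y => ?g x y) => change (Sm g); smt_gen extra
  | _ => extra tt
  end.
Ltac nofail _ := fail.
Ltac smt := smt_gen nofail.
Ltac exd_tac := apply Sm_exd; [smt|auto].

Lemma pd_gm_sym k u v : U u v -> pd k (gm n f true false) u v = pd k (gm n f false true) u v.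
Proof. intros H. apply pd_ext; auto. intros x y _. apply gm_sym. Qed.

Lemma pd_pd_gm_sym k k' u v : U u v ->
  pd k' (pd k (gm n f true false)) u v = pd k' (pd k (gm n f false true)) u v.
Proof. intros H. apply pd_ext; auto. intros x y Hxy. apply pd_gm_sym; auto. Qed.

Lemma pd_detg k u v : U u v -> pd k (detg n f) u v =
  pd k (gm n f false false) u v * gm n f true true u v + gm n f false false u v * pd k (gm n f true true) u v
  - 2 * gm n f false true u v * pd k (gm n f false true) u v.
Proof.
  intros H. unfold detg.
  rewrite (pd_minus k (fun u v => gm n f false false u v * gm n f true true u v)
     (fun u v => gm n f false true u v * gm n f true false u v)) by (apply exd_mult; exd_tac).
  rewrite !pd_mult by exd_tac. rewrite pd_gm_sym by auto. rewrite (gm_sym true false). ring.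
Qed.

Lemma J0 k i j u v : U u v -> pd k (ginv n f i j) u v =
  - sumB (fun l => chris n f i k l u v * ginv n f l j u v + chris n f j k l u v * ginv n f i l u v).
Proof.
  intros H. pose proof (detg_nz u v H) as D.
  unfold chris, sumB. unfold ginv at 1.
  destruct i, j.
  - rewrite (pd_div k (gm n f false false)) by (try exd_tac; auto).
    rewrite pd_detg by auto. unfold ginv. rewrite !pd_gm_sym by auto.
    unfold detg in *. rewrite !(gm_sym true false) in *. field; auto.
  - rewrite (pd_div k (fun u v => - gm n f true false u v)) by (try exd_tac; auto).
    rewrite pd_detg, pd_opp by auto. unfold ginv. rewrite !pd_gm_sym by auto.
    unfold detg in *. rewrite !(gm_sym true false) in *. field; auto.
  - rewrite (pd_div k (fun u v => - gm n f false true u v)) by (try exd_tac; auto).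
    rewrite pd_detg, pd_opp by auto. unfold ginv. rewrite !pd_gm_sym by auto.
    unfold detg in *. rewrite !(gm_sym true false) in *. field; auto.
  - rewrite (pd_div k (gm n f true true)) by (try exd_tac; auto).
    rewrite pd_detg by auto. unfold ginv. rewrite !pd_gm_sym by auto.
    unfold detg in *. rewrite !(gm_sym true false) in *. field; auto.
Qed.


Lemma chris_tf m u v : U u v -> chris n f m true false u v = chris n f m false true u v.
Proof.
  intros H. unfold chris, sumB. rewrite !pd_gm_sym by auto. ring.
Qed.
Lemma ginv_tf u v : ginv n f true false u v = ginv n f false true u v.
Proof. unfold ginv. rewrite (gm_sym true false). reflexivity. Qed.
Lemma hh_tf u v : U u v -> pd true (pd false hh) u v = pd false (pd true hh) u v.
Proof. intros H. apply Sm_schwarz; auto. smt. Qed.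
Lemma HessF_tf u v : U u v -> HessF true false u v = HessF false true u v.
Proof. intros H. unfold HessF, sumB. rewrite hh_tf, !chris_tf by auto. reflexivity. Qed.

Ltac canon := repeat first
  [ rewrite chris_tf by auto | rewrite ginv_tf | rewrite hh_tf by auto | rewrite HessF_tf by auto
  | rewrite (gm_sym true false) ].

Lemma pd_zeta k b u v : U u v -> pd k (zeta b) u v =
  - sumB (fun l => chris n f b k l u v * zeta l u v) + sumB (fun l => ginv n f b l u v * HessF l k u v).
Proof.
  intros H. unfold zeta at 1, sumB.
  rewrite (pd_plus k (fun u v => ginv n f b false u v * pd false hh u v)) by (apply exd_mult; exd_tac).
  rewrite !pd_mult by exd_tac. rewrite !J0 by auto.
  unfold zeta, HessF, sumB. destruct k, b; canon; ring.
Qed.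

Definition Nf : R -> R -> R := fun u v => sumB (fun b => zeta b u v * pd b hh u v).

Lemma pd_Nf k u v : U u v -> pd k Nf u v = 2 * sumB (fun l => zeta l u v * HessF l k u v).
Proof.
  intros H. unfold Nf at 1, sumB.
  rewrite (pd_plus k (fun u v => zeta false u v * pd false hh u v)) by (apply exd_mult; exd_tac).
  rewrite !pd_mult by exd_tac. rewrite !pd_zeta by auto.
  unfold zeta, HessF, sumB. destruct k; canon; ring.
Qed.


Lemma gm2_tf b c u v : U u v -> pd true (pd false (gm n f b c)) u v = pd false (pd true (gm n f b c)) u v.
Proof. intros H. apply Sm_schwarz; auto. smt. Qed.

Lemma pd_chris m k i j u v : U u v -> pd m (chris n f k i j) u v =
  / 2 * sumB (fun l => pd m (ginv n f k l) u v * (pd i (gm n f j l) u v + pd j (gm n f i l) u v - pd l (gm n f i j) u v)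
     + ginv n f k l u v * (pd m (pd i (gm n f j l)) u v + pd m (pd j (gm n f i l)) u v - pd m (pd l (gm n f i j)) u v)).
Proof.
  intros H. unfold chris at 1, sumB.
  rewrite (pd_mult m (fun _ _ => / 2)) by (first [lazymatch goal with |- exd _ (fun _ _ => ?c) _ _ => apply exd_const end | exd_tac]).
  rewrite pd_const.
  rewrite (pd_plus m (fun u v => ginv n f k false u v * (pd i (gm n f j false) u v + pd j (gm n f i false) u v - pd false (gm n f i j) u v))) by exd_tac.
  rewrite !pd_mult by exd_tac.
  rewrite !(pd_minus m (fun u v => pd i (gm n f j _) u v + pd j (gm n f i _) u v)) by exd_tac.
  rewrite !(pd_plus m (pd i (gm n f j _))) by exd_tac.
  ring.
Qed.

Definition R1 (l : bool) : R -> R -> R := fun u v =>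
  pd false (chris n f l false true) u v - pd true (chris n f l false false) u v
  + sumB (fun k => chris n f k false true u v * chris n f l false k u v
                   - chris n f k false false u v * chris n f l true k u v).

Ltac canon2 := repeat first
  [ rewrite chris_tf by auto | rewrite ginv_tf | rewrite (gm_sym true false)
  | rewrite pd_pd_gm_sym by auto | rewrite pd_gm_sym by auto | rewrite gm2_tf by auto ].

Lemma curv_a u v : U u v ->
  gm n f true false u v * Rvec n f false u v + gm n f true true u v * Rvec n f true u v = 0.
Proof.
  intros H. pose proof (detg_nz u v H) as D. unfold detg in D. rewrite (gm_sym true false) in D.
  unfold Rvec, sumB. rewrite !pd_chris by auto. unfold sumB. rewrite !J0 by auto.
  unfold chris, sumB. canon2. unfold ginv, detg in *. canon2.
  field; auto.

Qed.


Lemma curv_b u v : U u v ->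
  gm n f false false u v * R1 false u v + gm n f false true u v * R1 true u v = 0.
Proof.
  intros H. pose proof (detg_nz u v H) as D. unfold detg in D. rewrite (gm_sym true false) in D.
  unfold R1, sumB. rewrite !pd_chris by auto. unfold sumB. rewrite !J0 by auto.
  unfold chris, sumB. canon2. unfold ginv, detg in *. canon2.
  field; auto.
Qed.

Lemma curv_c u v : U u v ->
  gm n f false true u v * R1 false u v + gm n f true true u v * R1 true u v =
  - (gm n f false false u v * Rvec n f false u v + gm n f false true u v * Rvec n f true u v).
Proof.
  intros H. pose proof (detg_nz u v H) as D. unfold detg in D. rewrite (gm_sym true false) in D.
  unfold R1, Rvec, sumB. rewrite !pd_chris by auto. unfold sumB. rewrite !J0 by auto.
  unfold chris, sumB. canon2. unfold ginv, detg in *. canon2.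
  field; auto.
Qed.


Variable w : bool -> R -> R -> R.
Hypothesis Hnull : forall u v, U u v ->
  mink n (tanpart n f Z u v) (tanpart n f Z u v) = 0 /\
  exists i, (i <= n)%nat /\ tanpart n f Z u v i <> 0.
Hypothesis Hw : forall u v, U u v ->
  mink n (tvec f w u v) (tvec f w u v) = 0 /\
  (exists i, (i <= n)%nat /\ tvec f w u v i <> 0) /\
  mink n (tanpart n f Z u v) (tvec f w u v) = -1.

Lemma N0 u v : U u v -> Nf u v = 0.
Proof. intros H. unfold Nf. rewrite <- null_eq by (auto; apply detg_nz; auto). apply Hnull; auto. Qed.

Lemma Znz u v : U u v -> zeta false u v <> 0 \/ zeta true u v <> 0.
Proof. intros H. apply tz_nz; auto. apply Hnull; auto. Qed.

Lemma Wh u v : U u v -> w false u v * pd false hh u v + w true u v * pd true hh u v = -1.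
Proof.
  intros H. destruct (Hw u v H) as [_ [_ E]]. rewrite tan_tvec in E by (auto; apply detg_nz; auto).
  exact E.
Qed.

Lemma Wn u v : U u v -> sumB (fun b => sumB (fun c => w b u v * w c u v * gm n f b c u v)) = 0.
Proof. intros H. rewrite <- tvec_null. apply Hw; auto. Qed.

Lemma HZ k u v : U u v -> zeta false u v * HessF false k u v + zeta true u v * HessF true k u v = 0.
Proof.
  intros H.
  assert (E : pd k Nf u v = pd k (fun _ _ => 0) u v).
  { apply pd_ext; auto. intros x y Hxy. apply N0; auto. }
  rewrite pd_const, pd_Nf in E by auto. unfold sumB in E. lra.
Qed.

Definition Af : R -> R -> R := fun u v =>
  (HessF false false u v + HessF true true u v) /
  (pd false hh u v * pd false hh u v + pd true hh u v * pd true hh u v).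

Lemma alg_at u v : U u v ->
  pd false hh u v * pd false hh u v + pd true hh u v * pd true hh u v <> 0 /\
  HessF false false u v = Af u v * pd false hh u v * pd false hh u v /\
  HessF false true u v = Af u v * pd false hh u v * pd true hh u v /\
  HessF true true u v = Af u v * pd true hh u v * pd true hh u v /\
  w false u v * w false u v * HessF false false u v + w false u v * w true u v * HessF false true u v
  + w true u v * w false u v * HessF false true u v + w true u v * w true u v * HessF true true u v = Af u v.
Proof.
  intros H. unfold Af.
  apply (alg_H (zeta false u v) (zeta true u v)).
  - pose proof (HZ false u v H). rewrite HessF_tf in H0 by auto. lra.
  - exact (HZ true u v H).
  - pose proof (N0 u v H). unfold Nf, sumB in H0. lra.
  - apply Znz; auto.
  - apply Wh; auto.
Qed.

Lemma hs_nz u v : U u v -> pd false hh u v * pd false hh u v + pd true hh u v * pd true hh u v <> 0.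
Proof. intros H. apply alg_at; auto. Qed.

Lemma E_ij i j u v : U u v -> HessF i j u v = Af u v * pd i hh u v * pd j hh u v.
Proof.
  intros H. destruct (alg_at u v H) as [_ [A1 [A2 [A3 _]]]].
  destruct i, j; auto.
  - rewrite HessF_tf by auto. rewrite A2. ring.
Qed.

Lemma a_eq u v : U u v ->
  sumB (fun b => sumB (fun c => w b u v * w c u v * mink n (II n f b c u v) (normpart n f Z u v))) = Af u v.
Proof.
  intros H. destruct (alg_at u v H) as [_ [_ [_ [_ A4]]]].
  unfold sumB. rewrite !M_eq by (auto; apply detg_nz; auto). canon. rewrite <- A4. ring.
Qed.

Lemma Sm_Af : Sm Af.
Proof.
  unfold Af. apply Sm_div; [smt|smt|apply hs_nz].
Qed.
Ltac af_tac _ := lazymatch goal with |- Sm Af => apply Sm_Af end.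
Ltac smtA := smt_gen af_tac.
Ltac exd_tacA := apply Sm_exd; [smtA|auto].


Lemma pd_HessF k i j u v : U u v -> pd k (HessF i j) u v =
  pd k (pd j (pd i hh)) u v - sumB (fun l => pd k (chris n f l i j) u v * pd l hh u v
                                           + chris n f l i j u v * pd k (pd l hh) u v).
Proof.
  intros H. unfold HessF at 1, sumB.
  rewrite (pd_minus k (pd j (pd i hh))) by exd_tacA.
  rewrite (pd_plus k (fun u v => chris n f false i j u v * pd false hh u v)) by exd_tacA.
  rewrite !pd_mult by exd_tacA. reflexivity.
Qed.

Lemma pd_E k i j u v : U u v -> pd k (HessF i j) u v =
  pd k Af u v * pd i hh u v * pd j hh u v + Af u v * pd k (pd i hh) u v * pd j hh u v
  + Af u v * pd i hh u v * pd k (pd j hh) u v.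
Proof.
  intros H.
  rewrite (pd_ext k (HessF i j) (fun u v => (Af u v * pd i hh u v) * pd j hh u v)); auto.
  - rewrite (pd_mult k (fun u v => Af u v * pd i hh u v) (pd j hh)) by
      exd_tacA.
    rewrite (pd_mult k Af (pd i hh)) by exd_tacA. ring.
  - intros x y Hxy. apply E_ij; auto.
Qed.

Lemma s_expr a b u v : U u v -> pd b (pd a hh) u v =
  Af u v * pd a hh u v * pd b hh u v + sumB (fun m => chris n f m a b u v * pd m hh u v).
Proof. intros H. rewrite <- E_ij by auto. unfold HessF. ring. Qed.

Lemma T1 u v : U u v -> pd true (pd true (pd false hh)) u v = pd false (pd true (pd true hh)) u v.
Proof.
  intros H. rewrite (pd_ext true (pd true (pd false hh)) (pd false (pd true hh))); auto.
  - apply Sm_schwarz; auto. smtA.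
  - intros x y Hxy. apply hh_tf; auto.
Qed.
Lemma T2 u v : U u v -> pd true (pd false (pd false hh)) u v = pd false (pd false (pd true hh)) u v.
Proof.
  intros H. rewrite Sm_schwarz by (auto; smtA).
  apply pd_ext; auto. intros x y Hxy. apply hh_tf; auto.
Qed.
Lemma dchris_tf k l u v : U u v -> pd k (chris n f l true false) u v = pd k (chris n f l false true) u v.
Proof. intros H. apply pd_ext; auto. intros x y Hxy. apply chris_tf; auto. Qed.

Ltac lincomb2 e1 e2 k1 k2 :=
  match type of e1 with ?a = ?b => match type of e2 with ?c = ?d =>
    apply Rminus_diag_uniq; transitivity (k1 * (a - b) + k2 * (c - d));
    [ring | rewrite (Rminus_diag_eq _ _ e1), (Rminus_diag_eq _ _ e2); ring] end end.

Ltac canon_h H := repeat first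
  [ rewrite chris_tf in H by auto | rewrite ginv_tf in H | rewrite hh_tf in H by auto
  | rewrite HessF_tf in H by auto | rewrite dchris_tf in H by auto | rewrite (gm_sym true false) in H ].

Lemma dummy_sep : True. Proof. exact I. Qed.

Lemma Ricci2 u v : U u v ->
  Rvec n f false u v * pd false hh u v + Rvec n f true u v * pd true hh u v =
  - pd true hh u v * (pd true hh u v * pd false Af u v - pd false hh u v * pd true Af u v).
Proof.
  intros H.
  pose proof (pd_HessF false true true u v H) as e1. rewrite pd_E in e1 by auto.
  pose proof (pd_HessF true false true u v H) as e2. rewrite pd_E in e2 by auto.
  rewrite T1 in e2 by auto.
  unfold sumB in e1, e2.
  rewrite !s_expr in e1, e2 by auto. unfold sumB in e1, e2.
  unfold Rvec, sumB. canon. canon_h e1. canon_h e2.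
  lincomb2 e1 e2 1 (-1).
Qed.


Lemma Ricci1 u v : U u v ->
  R1 false u v * pd false hh u v + R1 true u v * pd true hh u v =
  - pd false hh u v * (pd true hh u v * pd false Af u v - pd false hh u v * pd true Af u v).
Proof.
  intros H.
  pose proof (pd_HessF false true false u v H) as e1. rewrite pd_E in e1 by auto.
  pose proof (pd_HessF true false false u v H) as e2. rewrite pd_E in e2 by auto.
  rewrite T2 in e2 by auto.
  unfold sumB in e1, e2.
  rewrite !s_expr in e1, e2 by auto. unfold sumB in e1, e2.
  unfold R1, sumB. canon. canon_h e1. canon_h e2.
  lincomb2 e1 e2 1 (-1).
Qed.


Lemma K_eq u v : U u v ->
  gaussK n f u v = zeta false u v * pd false Af u v + zeta true u v * pd true Af u v.
Proof.
  intros H. pose proof (detg_nz u v H) as D. unfold detg in D. rewrite (gm_sym true false) in D.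
  pose proof (curv_a u v H) as Ca. pose proof (curv_b u v H) as Cb. pose proof (curv_c u v H) as Cc.
  pose proof (Ricci1 u v H) as R1e. pose proof (Ricci2 u v H) as R2e.
  pose proof (N0 u v H) as N. pose proof (Wh u v H) as W.
  rewrite (gm_sym true false) in Ca.
  set (K := gaussK n f u v).
  assert (KD : gm n f false false u v * Rvec n f false u v + gm n f false true u v * Rvec n f true u v
     = K * (gm n f false false u v * gm n f true true u v - gm n f false true u v * gm n f false true u v)).
  { unfold K, gaussK, sumB, detg. rewrite (gm_sym true false). field. auto. }
  rewrite KD in Cc.
  destruct (solve2 _ _ _ _ _ _ _ D KD Ca) as [RF RT].
  destruct (solve2 _ _ _ _ _ _ _ D Cb Cc) as [SF ST].
  unfold Nf, zeta, sumB, ginv, detg in N. rewrite (gm_sym true false) in N.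
  unfold zeta, sumB, ginv, detg. rewrite (gm_sym true false).
  set (gFF := gm n f false false u v) in *. set (gFT := gm n f false true u v) in *.
  set (gTT := gm n f true true u v) in *.
  set (hF := pd false hh u v) in *. set (hT := pd true hh u v) in *.
  set (AF := pd false Af u v) in *. set (AT := pd true Af u v) in *.
  assert (Q : gTT*hF*hF - 2*gFT*hF*hT + gFF*hT*hT = 0).
  { assert (E : gTT*hF*hF - 2*gFT*hF*hT + gFF*hT*hT =
      ((gTT / (gFF * gTT - gFT * gFT) * hF + - gFT / (gFF * gTT - gFT * gFT) * hT) * hF +
       (- gFT / (gFF * gTT - gFT * gFT) * hF + gFF / (gFF * gTT - gFT * gFT) * hT) * hT)
       * (gFF * gTT - gFT * gFT)) by (field; auto).
    rewrite E, N. ring. }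
  assert (Hn : hF <> 0 \/ hT <> 0).
  { destruct (Req_dec hF 0) as [e|e]; [right|left; auto]. intro e'. rewrite e, e' in W. lra. }
  assert (KK := alg_K gFF gFT gTT hF hT AF AT K D Q Hn).
  assert (K * (gFF * gTT - gFT * gFT) = (gTT * hF - gFT * hT) * AF + (gFF * hT - gFT * hF) * AT).
  { apply KK.
    - rewrite <- R2e, RF, RT. field; auto.
    - rewrite <- R1e, SF, ST. field; auto. }
  apply (Rmult_eq_reg_r (gFF * gTT - gFT * gFT)); auto. rewrite H0. field; auto.
Qed.


Lemma ginv_formula i j u v : U u v ->
  ginv n f i j u v = -(zeta i u v * w j u v + w i u v * zeta j u v).
Proof.
  intros H. pose proof (detg_nz u v H) as D. unfold detg in D. rewrite (gm_sym true false) in D.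
  pose proof (N0 u v H) as N. pose proof (Wh u v H) as W. pose proof (Wn u v H) as Wn0.
  unfold Nf, zeta, sumB, ginv, detg in N. rewrite (gm_sym true false) in N.
  unfold sumB in Wn0. rewrite (gm_sym true false) in Wn0.
  unfold zeta, sumB, ginv, detg. rewrite (gm_sym true false).
  set (gFF := gm n f false false u v) in *. set (gFT := gm n f false true u v) in *.
  set (gTT := gm n f true true u v) in *.
  set (hF := pd false hh u v) in *. set (hT := pd true hh u v) in *.
  set (wF := w false u v) in *. set (wT := w true u v) in *.
  assert (Q : gTT*hF*hF - 2*gFT*hF*hT + gFF*hT*hT = 0).
  { assert (E : gTT*hF*hF - 2*gFT*hF*hT + gFF*hT*hT =
      ((gTT / (gFF * gTT - gFT * gFT) * hF + - gFT / (gFF * gTT - gFT * gFT) * hT) * hF +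
       (- gFT / (gFF * gTT - gFT * gFT) * hF + gFF / (gFF * gTT - gFT * gFT) * hT) * hT)
       * (gFF * gTT - gFT * gFT)) by (field; auto).
    rewrite E, N. ring. }
  assert (Nw : gFF*wF*wF + 2*gFT*wF*wT + gTT*wT*wT = 0) by lra.
  assert (ID : (gFF*gTT - gFT*gFT) * / (gFF*gTT - gFT*gFT) = 1) by (field; auto).
  destruct (alg_gi gFF gFT gTT hF hT wF wT (/ (gFF*gTT - gFT*gFT)) ID Q Nw W) as [X1 [X2 [X3 X4]]].
  unfold Rdiv. destruct i, j; auto.
Qed.

Lemma lap_ext g1 g2 u v : U u v -> eqU g1 g2 -> lap n f g1 u v = lap n f g2 u v.
Proof.
  intros H E. unfold lap, sumB.
  assert (E1 : forall i, eqU (pd i g1) (pd i g2)) by (intros; apply pd_ext; auto).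
  assert (E2 : forall i j, pd j (pd i g1) u v = pd j (pd i g2) u v) by (intros; apply pd_ext; auto).
  rewrite !E2, !E1 by auto. reflexivity.
Qed.

Lemma Af_tf u v : U u v -> pd true (pd false Af) u v = pd false (pd true Af) u v.
Proof. intros H. apply Sm_schwarz; auto. apply Sm_Af. Qed.

Lemma sum_ginv_Hess b k u v : U u v ->
  sumB (fun l => ginv n f b l u v * HessF l k u v) = Af u v * pd k hh u v * zeta b u v.
Proof. intros H. unfold sumB, zeta. rewrite !E_ij by auto. unfold sumB. ring. Qed.

Lemma pd_K b u v : U u v -> pd b (gaussK n f) u v =
  sumB (fun c => (- sumB (fun l => chris n f c b l u v * zeta l u v) + Af u v * pd b hh u v * zeta c u v)
                   * pd c Af u v + zeta c u v * pd b (pd c Af) u v).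
Proof.
  intros H.
  rewrite (pd_ext b (gaussK n f) (fun u v => zeta false u v * pd false Af u v + zeta true u v * pd true Af u v)); auto.
  - rewrite (pd_plus b (fun u v => zeta false u v * pd false Af u v)) by exd_tacA.
    rewrite (pd_mult b (zeta false) (pd false Af)) by exd_tacA.
    rewrite (pd_mult b (zeta true) (pd true Af)) by exd_tacA.
    rewrite !pd_zeta by auto. rewrite !sum_ginv_Hess by auto. unfold sumB. ring.
  - intros x y Hxy. apply K_eq; auto.
Qed.

Lemma main_at u v : U u v ->
  lap n f (fun u v => sumB (fun b => sumB (fun c =>
      w b u v * w c u v * mink n (II n f b c u v) (normpart n f Z u v)))) u v
  = -2 * gaussK n f u v * sumB (fun b => sumB (fun c =>
      w b u v * w c u v * mink n (II n f b c u v) (normpart n f Z u v)))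
    - 2 * sumB (fun b => w b u v * pd b (gaussK n f) u v).
Proof.
  intros H.
  rewrite (lap_ext _ Af) by (auto; intros x y Hxy; apply a_eq; auto).
  rewrite a_eq by auto.
  unfold lap, sumB. rewrite !pd_K by auto.
  rewrite K_eq by auto.
  pose proof (Wh u v H) as W.
  unfold sumB. rewrite !ginv_formula by auto.
  canon. rewrite !Af_tf by auto.
  apply Rminus_diag_uniq.
  transitivity (2 * Af u v * (zeta false u v * pd false Af u v + zeta true u v * pd true Af u v)
     * (w false u v * pd false hh u v + w true u v * pd true hh u v + 1)).
  - ring.
  - rewrite W. ring.
Qed.

End Calc.

Theorem mainTheorem12
  (n : nat) (U : R -> R -> Prop) (f : nat -> R -> R -> R)
  (Z : nat -> R) (w : bool -> R -> R -> R) :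
  openU U ->
  (forall i, (i <= n)%nat -> smooth_on U (f i)) ->
  (* timelike: the induced metric has signature (1,1) *)
  (forall u v, U u v -> detg n f u v < 0) ->
  (* Z constant unit spacelike *)
  mink n Z Z = 1 ->
  (* canonical null direction: Z^T lightlike everywhere on M *)
  (forall u v, U u v ->
     mink n (tanpart n f Z u v) (tanpart n f Z u v) = 0 /\
     exists i, (i <= n)%nat /\ tanpart n f Z u v i <> 0) ->
  (* W = tvec w : lightlike tangent field with <Z^T, W> = -1 *)
  (forall u v, U u v ->
     mink n (tvec f w u v) (tvec f w u v) = 0 /\
     (exists i, (i <= n)%nat /\ tvec f w u v i <> 0) /\
     mink n (tanpart n f Z u v) (tvec f w u v) = -1) ->
  let a := fun u v =>
    sumB (fun b => sumB (fun c =>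
      w b u v * w c u v * mink n (II n f b c u v) (normpart n f Z u v))) in
  let K := gaussK n f in
  (forall u v, U u v ->
     lap n f a u v = -2 * K u v * a u v - 2 * sumB (fun b => w b u v * pd b K u v))
  /\ ((forall u v, U u v -> K u v = 0) ->
      forall u v, U u v -> lap n f a u v = 0).
Proof.
  intros HU Hf HD HZ Hnull Hw a K.
  assert (M : forall u v, U u v -> lap n f a u v = -2 * K u v * a u v - 2 * sumB (fun b => w b u v * pd b K u v)).
  { intros u v H. unfold a, K. eapply main_at; eauto. }
  split; auto.
  intros HK u v H. rewrite M by auto.
  assert (P : forall b, pd b K u v = 0).
  { intros b. rewrite (pd_ext U HU b K (fun _ _ => 0)). apply pd_const. intros x y Hxy; apply HK; auto. auto. }
  unfold sumB. rewrite !P, HK by auto. ring.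
Qed.
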